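(* Consider $\bm{y}=\bm{A}\bm{x}+\bm{w}$ over $\mathbb{H}\in\{\mathbb{R},\mathbb{C}\}$, with $\bm A$ having i.i.d. entries $\mathcal{N}(0,1/m)$ (resp. $\mathcal{CN}(0,1/m)$), Gaussian noise of variance $\sigma_w^2=\delta\sigma_0^2$ ($\delta=m/n$, $\sigma_0^2>0$ constant), and signal entries i.i.d. from the least-favorable distribution with sparsity level $\epsilon\in(0,1]$, recovered by AMP with (real or complex) soft thresholding and optimal threshold. Let $\delta^\dagger$ be the MSE-optimal measurement ratio, which satisfies $\delta^\dagger=2M(\epsilon,\alpha^\dagger)$ in the real case and $\delta^\dagger=2M_C(\epsilon,\alpha^\dagger)$ in the complex case. Then $\delta^{\dagger}<2$. Moreover, if $M(\epsilon,\alpha^{\dagger})<0.5$ in the real case, respectively $M_C(\epsilon,\alpha^{\dagger})<0.5$ in the complex case, then $\delta^{\dagger}<1$.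
   Context: Real case: the least-favorable distribution is $p_x=\frac{\epsilon}{2}\Delta_{x=-\mu}+(1-\epsilon)\Delta_{x=0}+\frac{\epsilon}{2}\Delta_{x=\mu}$ with $\mu\to\infty$, and $$M(\epsilon,\alpha)=\epsilon(1+\alpha^2)+(1-\epsilon)\left[2(1+\alpha^2)\Phi(-\alpha)-2\alpha\phi(\alpha)\right],\quad \alpha^\dagger=\arg\min_{\alpha\ge0}M(\epsilon,\alpha).$$ Complex case: $|x|$ has distribution $(1-\epsilon)\Delta_{|x|=0}+\epsilon\Delta_{|x|=+\infty}$ with isotropic phase, the estimator is $\eta(\beta,\lambda)=(\beta-\lambda\beta/|\beta|)\mathbf{1}_{\{|\beta|>\lambda\}}$, and $$M_C(\epsilon,\alpha)=\epsilon(1+\alpha^2)+(1-\epsilon)\left[\sqrt{2\pi}\,\phi(\sqrt2\alpha)-2\alpha\sqrt{\pi}\,\Phi(-\sqrt2\alpha)\right],\quad \alpha^\dagger=\arg\min_{\alpha\ge0}M_C(\epsilon,\alpha).$$ Here $\phi,\Phi$ are the standard Gaussian density and CDF. The MSE-optimal $\delta^\dagger$ is the minimizer over $\delta$ of the state-evolution fixed-point MSE $\mathrm{Err}_\infty=\frac{M\delta^2\sigma_0^2}{\delta-M}$ (with $M=M(\epsilon,\alpha^\dagger)$ or $M_C(\epsilon,\alpha^\dagger)$), assuming AMP converges. *)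

(* Defs.v *)
From Stdlib Require Import Reals.
From Coquelicot Require Import Coquelicot.
Open Scope R_scope.

Definition phi (x : R) : R := exp (- (x ^ 2) / 2) / sqrt (2 * PI).

Definition Phi (x : R) : R :=
  RInt_gen phi (Rbar_locally m_infty) (at_point x).

Definition M_R (eps alpha : R) : R :=
  eps * (1 + alpha ^ 2)
  + (1 - eps) * (2 * (1 + alpha ^ 2) * Phi (- alpha) - 2 * alpha * phi alpha).

Definition M_C (eps alpha : R) : R :=
  eps * (1 + alpha ^ 2)
  + (1 - eps) * (sqrt (2 * PI) * phi (sqrt 2 * alpha)
                 - 2 * alpha * sqrt PI * Phi (- (sqrt 2 * alpha))).

(* cplx = false : real case (H = R);  cplx = true : complex case (H = C) *)
Definition Mfun (cplx : bool) : R -> R -> R := if cplx then M_C else M_R.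

(* state-evolution fixed-point MSE  Err_oo = M delta^2 sigma0^2 / (delta - M),
   meaningful (AMP converges to a finite fixed point) for delta > M *)
Definition Err_inf (M sigma0sq delta : R) : R :=
  M * delta ^ 2 * sigma0sq / (delta - M).

Definition is_alpha_dagger (cplx : bool) (eps alpha : R) : Prop :=
  0 <= alpha /\ forall a, 0 <= a -> Mfun cplx eps alpha <= Mfun cplx eps a.

Definition is_delta_dagger (M sigma0sq delta : R) : Prop :=
  M < delta /\ forall d, M < d -> Err_inf M sigma0sq delta <= Err_inf M sigma0sq d.

(* Main.v *)
Require Import Defs.
From Stdlib Require Import Reals Lra Psatz.
From Coquelicot Require Import Coquelicot.
Open Scope R_scope.

Definition g (t : R) : R := exp (- (t ^ 2)).
Definition I (x : R) : R := RInt g 0 x.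
Definition k (x t : R) : R := exp (- (x ^ 2 * (1 + t ^ 2))) / (1 + t ^ 2).
Definition J (x : R) : R := RInt (k x) 0 1.

Lemma g_cont x : continuous g x.
Proof. apply (@ex_derive_continuous R_AbsRing R_NormedModule). unfold g. auto_derive. easy. Qed.

Lemma g_int a b : ex_RInt g a b.
Proof. apply (@ex_RInt_continuous R_CompleteNormedModule). intros; apply g_cont. Qed.

Lemma k_cont x t : continuous (k x) t.
Proof. apply (@ex_derive_continuous R_AbsRing R_NormedModule). unfold k. auto_derive. nra. Qed.

Lemma k_int x a b : ex_RInt (k x) a b.
Proof. apply (@ex_RInt_continuous R_CompleteNormedModule). intros; apply k_cont. Qed.

Lemma I_deriv x : is_derive I x (g x).
Proof.
  apply (@is_derive_RInt R_CompleteNormedModule) with 0.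
  - apply filter_forall. intros; apply (@RInt_correct R_CompleteNormedModule), g_int.
  - apply g_cont.
Qed.

Lemma Dk x t : Derive (fun u => k u t) x = -2 * x * exp (- (x ^ 2 * (1 + t ^ 2))).
Proof.
  apply is_derive_unique. unfold k. auto_derive. nra.
  simpl. field. nra.
Qed.

Lemma J_deriv x : is_derive J x (RInt (fun t => -2 * x * exp (- (x ^ 2 * (1 + t ^ 2)))) 0 1).
Proof.
  unfold J.
  rewrite <- (RInt_ext (fun t => Derive (fun u => k u t) x)).
  2:{ intros; apply Dk. }
  apply (is_derive_RInt_param k 0 1 x).
  - apply filter_forall. intros y t _. unfold k. auto_derive. nra.
  - intros t _.
    apply continuity_2d_pt_ext with (fun u v => -2 * u * exp (- (u ^ 2 * (1 + v ^ 2)))).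
    { intros; symmetry; apply Dk. }
    apply continuity_2d_pt_mult.
    + apply continuity_2d_pt_mult. apply continuity_2d_pt_const. apply continuity_2d_pt_id1.
    + apply continuity_2d_pt_filterlim.
      apply (filterlim_comp _ _ _ (fun z : R * R => - (fst z ^ 2 * (1 + snd z ^ 2))) exp _ (locally (- (x ^ 2 * (1 + t ^ 2))))).
      * apply (continuity_2d_pt_filterlim (fun u v => - (u ^ 2 * (1 + v ^ 2)))).
        apply continuity_2d_pt_ext with (fun u v => - ((u * u) * (1 + v * v))).
        { intros; simpl; ring. }
        apply continuity_2d_pt_opp, continuity_2d_pt_mult.
        apply continuity_2d_pt_mult; apply continuity_2d_pt_id1.
        apply continuity_2d_pt_plus. apply continuity_2d_pt_const.
        apply continuity_2d_pt_mult; apply continuity_2d_pt_id2.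
      * apply (@ex_derive_continuous R_AbsRing R_NormedModule). auto_derive. easy.
  - apply filter_forall. intros; apply k_int.
Qed.

Lemma J_deriv_val x : RInt (fun t => -2 * x * exp (- (x ^ 2 * (1 + t ^ 2)))) 0 1 = -2 * g x * I x.
Proof.
  rewrite (RInt_ext _ (fun t => scal (-2 * g x) (scal x (g (x * t + 0))))).
  2:{ intros t _. unfold g, scal; simpl. unfold mult; simpl.
      replace (- (x * (x * 1) * (1 + t * (t * 1)))) with (- (x * (x * 1)) + - ((x * t + 0) * ((x * t + 0) * 1))) by ring.
      rewrite exp_plus. ring. }
  rewrite (@RInt_scal R_CompleteNormedModule).
  2:{ apply (@ex_RInt_continuous R_CompleteNormedModule). intros.
      apply (@ex_derive_continuous R_AbsRing R_NormedModule). unfold g, scal; simpl; unfold mult; simpl. auto_derive. easy. }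
  rewrite (@RInt_comp_lin R_CompleteNormedModule). 2: apply g_int.
  unfold I, scal; simpl; unfold mult; simpl. f_equal; f_equal; ring.
Qed.

Lemma h_deriv x : is_derive (fun y => I y ^ 2 + J y) x 0.
Proof.
  assert (H := is_derive_plus (fun y => I y ^ 2) J x _ _ (is_derive_pow I 2 x _ (I_deriv x)) (J_deriv x)).
  rewrite J_deriv_val in H.
  replace 0 with (plus (INR 2 * g x * I x ^ Init.Nat.pred 2) (-2 * g x * I x)).
  exact H.
  unfold plus; simpl. ring.
Qed.

Lemma J0 : J 0 = PI / 4.
Proof.
  unfold J.
  assert (E : forall t, Rmin 0 1 < t < Rmax 0 1 -> k 0 t = / (1 + t ^ 2)).
  { intros t _. unfold k. replace (- (0 ^ 2 * (1 + t ^ 2))) with 0 by ring. rewrite exp_0. field. nra. }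
  rewrite (RInt_ext _ _ _ _ E).
  rewrite (is_RInt_unique _ _ _ (minus (atan 1) (atan 0))).
  - rewrite atan_1, atan_0. unfold minus, plus, opp; simpl. ring.
  - apply (@is_RInt_derive R_CompleteNormedModule).
    + intros x _. apply is_derive_Reals. apply derivable_pt_lim_atan.
    + intros x _. apply (@ex_derive_continuous R_AbsRing R_NormedModule). auto_derive. nra.
Qed.

Lemma h_const x : I x ^ 2 + J x = PI / 4.
Proof.
  rewrite <- J0.
  replace (J 0) with (I 0 ^ 2 + J 0).
  2:{ unfold I. rewrite RInt_point. unfold zero; simpl. ring. }
  destruct (Rtotal_order x 0) as [Hx|[Hx|Hx]].
  - apply (eq_is_derive (fun y => I y ^ 2 + J y) x 0); [intros; apply h_deriv | exact Hx].
  - subst; reflexivity.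
  - symmetry. apply (eq_is_derive (fun y => I y ^ 2 + J y) 0 x); [intros; apply h_deriv | exact Hx].
Qed.

Lemma exp_le a b : a <= b -> exp a <= exp b.
Proof. intros [H|H]. apply Rlt_le, exp_increasing, H. subst; lra. Qed.

Lemma RInt_const_R (c a b : R) : RInt (fun _ => c) a b = (b - a) * c.
Proof. rewrite RInt_const. reflexivity. Qed.

Lemma J_bounds x : 0 <= J x <= exp (- (x ^ 2)).
Proof.
  unfold J. split.
  - apply Rle_trans with (RInt (fun _ => 0) 0 1).
    { rewrite RInt_const_R. lra. }
    apply RInt_le. lra. apply ex_RInt_const. apply k_int.
    intros t _. unfold k. apply Rle_mult_inv_pos. apply Rlt_le, exp_pos. nra.
  - apply Rle_trans with (RInt (fun _ => exp (- x ^ 2)) 0 1).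
    2:{ rewrite RInt_const_R. lra. }
    apply RInt_le. lra. apply k_int. apply ex_RInt_const.
    intros t Ht. unfold k.
    apply Rle_trans with (exp (- (x ^ 2 * (1 + t ^ 2)))).
    + unfold Rdiv. rewrite <- (Rmult_1_r (exp _)) at 2. apply Rmult_le_compat_l.
      apply Rlt_le, exp_pos. rewrite <- Rinv_1. apply Rinv_le_contravar; nra.
    + apply exp_le. assert (0 <= x^2 * t^2) by (apply Rmult_le_pos; apply pow2_ge_0). nra.
Qed.

Lemma PI_gt3 : 3 < PI.
Proof. generalize PI2_3_2; lra. Qed.

Lemma I_nonneg y : 0 <= y -> 0 <= I y.
Proof.
  intros Hy. unfold I.
  apply Rle_trans with (RInt (fun _ => 0) 0 y).
  { rewrite RInt_const_R. lra. }
  apply RInt_le. lra. apply ex_RInt_const. apply g_int.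
  intros; unfold g; apply Rlt_le, exp_pos.
Qed.

Lemma exp_neg_bound z : 0 <= z -> exp (- z) <= / (1 + z).
Proof.
  intros Hz. rewrite exp_Ropp. apply Rinv_le_contravar. lra. apply exp_ineq1_le.
Qed.

Lemma I_bound y : 0 <= y ->
  0 <= sqrt PI / 2 - I y <= 2 * exp (- (y ^ 2)) / sqrt PI.
Proof.
  intros Hy.
  pose proof (I_nonneg y Hy) as HI.
  pose proof (h_const y) as Hh.
  pose proof (J_bounds y) as HJ.
  assert (Hs : 0 < sqrt PI) by (apply sqrt_lt_R0; generalize PI_gt3; lra).
  assert (Hs2 : sqrt PI * sqrt PI = PI) by (apply sqrt_sqrt; generalize PI_gt3; lra).
  set (s := sqrt PI) in *. set (i := I y) in *. set (E := exp (- y ^ 2)) in *.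
  assert (H1 : 0 <= s / 2 - i).
  { destruct (Rle_or_lt i (s/2)). lra. nra. }
  split. exact H1.
  apply Rmult_le_reg_r with (s / 2). lra.
  replace (2 * E / s * (s / 2)) with E by (field; lra).
  nra.
Qed.

Lemma phi_cont x : continuous phi x.
Proof. apply (@ex_derive_continuous R_AbsRing R_NormedModule). unfold phi. auto_derive.
  assert (0 < sqrt (2 * PI)) by (apply sqrt_lt_R0; generalize PI_gt3; lra). lra. Qed.

Lemma phi_int a b : ex_RInt phi a b.
Proof. apply (@ex_RInt_continuous R_CompleteNormedModule). intros; apply phi_cont. Qed.

Definition G (x : R) : R := RInt phi 0 x.

Lemma sqrt2PI : sqrt (2 * PI) = sqrt 2 * sqrt PI.
Proof. apply sqrt_mult; generalize PI_gt3; lra. Qed.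

Lemma G_sub u : G u = - I (- u / sqrt 2) / sqrt PI.
Proof.
  assert (Hs : 0 < sqrt PI) by (apply sqrt_lt_R0; generalize PI_gt3; lra).
  assert (H2 : 0 < sqrt 2) by (apply sqrt_lt_R0; lra).
  assert (H22 : sqrt 2 * sqrt 2 = 2) by (apply sqrt_sqrt; lra).
  set (c := - / sqrt 2).
  unfold G.
  rewrite (RInt_ext phi (fun t => scal (- / sqrt PI) (scal c (g (c * t + 0))))).
  2:{ intros t _. unfold phi, g, scal; simpl; unfold mult; simpl.
      rewrite sqrt2PI. unfold c.
      replace (- ((- / sqrt 2 * t + 0) * ((- / sqrt 2 * t + 0) * 1))) with (- (t * (t * 1)) / 2).
      2:{ field_simplify. 2: lra. replace (sqrt 2 ^ 2) with 2 by (simpl; lra). reflexivity. }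
      field. lra. }
  rewrite (@RInt_scal R_CompleteNormedModule).
  2:{ apply (@ex_RInt_continuous R_CompleteNormedModule). intros.
      apply (@ex_derive_continuous R_AbsRing R_NormedModule). unfold g, scal; simpl; unfold mult; simpl. auto_derive. easy. }
  rewrite (@RInt_comp_lin R_CompleteNormedModule). 2: apply g_int.
  unfold I, scal; simpl; unfold mult; simpl.
  replace (c * 0 + 0) with 0 by ring. replace (c * u + 0) with (- u / sqrt 2) by (unfold c; field; lra).
  field. lra.
Qed.

Lemma T_bounds u : u <= 0 -> 0 <= / 2 + G u <= / (1 + u ^ 2 / 2).
Proof.
  intros Hu.
  assert (Hs : 0 < sqrt PI) by (apply sqrt_lt_R0; generalize PI_gt3; lra).
  assert (Hs2 : sqrt PI * sqrt PI = PI) by (apply sqrt_sqrt; generalize PI_gt3; lra).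
  assert (H2 : 0 < sqrt 2) by (apply sqrt_lt_R0; lra).
  assert (H22 : sqrt 2 * sqrt 2 = 2) by (apply sqrt_sqrt; lra).
  set (y := - u / sqrt 2).
  assert (Hy : 0 <= y) by (unfold y; apply Rmult_le_pos; [lra | apply Rlt_le, Rinv_0_lt_compat; lra]).
  assert (Hy2 : y ^ 2 = u ^ 2 / 2).
  { unfold y. field_simplify. 2: lra. replace (sqrt 2 ^ 2) with 2 by (simpl; lra). reflexivity. }
  rewrite G_sub. fold y.
  pose proof (I_bound y Hy) as [B1 B2].
  pose proof (exp_neg_bound (y ^ 2) (pow2_ge_0 y)) as B3.
  assert (E : / 2 + - I y / sqrt PI = (sqrt PI / 2 - I y) / sqrt PI) by (field; lra).
  rewrite E. split.
  - apply Rmult_le_pos. lra. apply Rlt_le, Rinv_0_lt_compat; lra.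
  - rewrite <- Hy2.
    apply Rle_trans with (2 * exp (- y ^ 2) / sqrt PI / sqrt PI).
    + unfold Rdiv. apply Rmult_le_compat_r. apply Rlt_le, Rinv_0_lt_compat; lra. exact B2.
    + replace (2 * exp (- y ^ 2) / sqrt PI / sqrt PI) with (2 / (sqrt PI * sqrt PI) * exp (- y ^ 2)) by (field; lra). rewrite Hs2.
      assert (0 < exp (- y ^ 2)) by apply exp_pos.
      assert (2 / PI < 1). { apply Rmult_lt_reg_r with PI. generalize PI_gt3; lra. field_simplify; generalize PI_gt3; lra. }
      assert (0 < 2 / PI) by (apply Rdiv_lt_0_compat; generalize PI_gt3; lra).
      nra.
Qed.

Lemma G_deriv x : is_derive G x (phi x).
Proof.
  apply (@is_derive_RInt R_CompleteNormedModule) with 0.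
  - apply filter_forall. intros; apply (@RInt_correct R_CompleteNormedModule), phi_int.
  - apply phi_cont.
Qed.

Lemma G_lim : filterlim G (Rbar_locally m_infty) (locally (- / 2)).
Proof.
  apply filterlim_locally. intros [eps Heps]. simpl.
  exists (- (2 / eps) - 1). intros x Hx.
  unfold ball; simpl; unfold AbsRing_ball, abs, minus, plus, opp; simpl.
  assert (Hx0 : x <= 0). { assert (0 < 2 / eps) by (apply Rdiv_lt_0_compat; lra). lra. }
  destruct (T_bounds x Hx0) as [B1 B2].
  rewrite Rabs_right by lra.
  replace (G x + - - / 2) with (/ 2 + G x) by ring.
  eapply Rle_lt_trans. exact B2.
  assert (H1 : 2 / eps < - x - 1) by lra.
  assert (H2 : 0 < 2 / eps) by (apply Rdiv_lt_0_compat; lra).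
  assert (H3 : 1 / eps < 1 + x ^ 2 / 2) by (unfold Rdiv in *; nra).
  apply Rlt_le_trans with (/ (1 / eps)). 2:{ right. field. lra. }
  apply Rinv_lt_contravar. apply Rmult_lt_0_compat. unfold Rdiv; apply Rmult_lt_0_compat; [lra| apply Rinv_0_lt_compat; lra]. nra.
  exact H3.
Qed.

Lemma Phi_eq x : Phi x = / 2 + G x.
Proof.
  unfold Phi.
  apply (@is_RInt_gen_unique R_CompleteNormedModule);
    [apply Proper_StrongProper, Rbar_locally_filter | apply Proper_StrongProper, at_point_filter | ].
  assert (H := is_RInt_gen_Derive (Fa := Rbar_locally m_infty) (Fb := at_point x) G (- / 2) (G x)).
  assert (H' : is_RInt_gen (Derive G) (Rbar_locally m_infty) (at_point x) (G x - - / 2)).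
  { apply H.
    - apply filter_forall. intros ab y _; exists (phi y). apply G_deriv.
    - apply filter_forall. intros ab y _. 
      apply (continuous_ext phi). intros; symmetry; apply is_derive_unique, G_deriv.
      apply phi_cont.
    - apply G_lim.
    - intros P HP. unfold filtermap, at_point. apply locally_singleton. exact HP. }
  replace (/ 2 + G x) with (G x - - / 2) by ring.
  apply (is_RInt_gen_ext (Derive G)).
  - apply filter_forall. intros ab y _. apply is_derive_unique, G_deriv.
  - exact H'.
Qed.

Lemma sqrt2PI_pos : 1 <= sqrt (2 * PI).
Proof.
  rewrite <- sqrt_1. apply sqrt_le_1_alt. generalize PI_gt3; lra.
Qed.

Lemma phi_pos x : 0 < phi x.
Proof. unfold phi. apply Rdiv_lt_0_compat. apply exp_pos. generalize sqrt2PI_pos; lra. Qed.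

Lemma phi_le1 x : phi x <= 1.
Proof.
  unfold phi. pose proof sqrt2PI_pos.
  apply Rle_trans with (exp (- x ^ 2 / 2)).
  - unfold Rdiv. rewrite <- (Rmult_1_r (exp (- x ^ 2 * / 2))) at 2.
    apply Rmult_le_compat_l. apply Rlt_le, exp_pos.
    rewrite <- Rinv_1. apply Rinv_le_contravar; lra.
  - rewrite <- exp_0. apply exp_le. assert (0 <= x^2) by apply pow2_ge_0. lra.
Qed.

Lemma phi_even x : phi (- x) = phi x.
Proof. unfold phi. f_equal. f_equal. f_equal. ring. Qed.

Lemma phi_mono a t : t ^ 2 <= a ^ 2 -> phi a <= phi t.
Proof.
  intros H. unfold phi. unfold Rdiv. apply Rmult_le_compat_r.
  apply Rlt_le, Rinv_0_lt_compat. generalize sqrt2PI_pos; lra.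
  apply exp_le. lra.
Qed.

Lemma Phi_diff a b : Phi b - Phi a = RInt phi a b.
Proof.
  rewrite !Phi_eq. unfold G.
  rewrite <- (@RInt_Chasles R_CompleteNormedModule phi 0 a b) by apply phi_int.
  unfold plus; simpl. ring.
Qed.

Lemma Phi0 : Phi 0 = / 2.
Proof. rewrite Phi_eq. unfold G. rewrite RInt_point. unfold zero; simpl. ring. Qed.

Lemma Phi_tail u : u <= 0 -> 0 <= Phi u <= / (1 + u ^ 2 / 2).
Proof. intros; rewrite Phi_eq; apply T_bounds; auto. Qed.

Lemma Phi_upper0 a : 0 <= a -> Phi (- a) <= / 2 - a * phi a.
Proof.
  intros Ha.
  pose proof (Phi_diff (- a) 0) as D. rewrite Phi0 in D.
  assert (a * phi a <= RInt phi (- a) 0).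
  { apply Rle_trans with (RInt (fun _ => phi a) (- a) 0).
    { rewrite RInt_const_R. lra. }
    apply RInt_le. lra. apply ex_RInt_const. apply phi_int.
    intros t Ht. apply phi_mono. nra. }
  lra.
Qed.

Lemma phi_deriv x : is_derive phi x (- x * phi x).
Proof.
  unfold phi. pose proof sqrt2PI_pos. auto_derive. lra.
  replace (- x ^ 2 / 2) with (- (x * (x * 1)) * / 2) by (simpl; field). field. lra.
Qed.

Lemma tail_small d c : 0 < d -> exists u, u <= c /\ u <= 0 /\ / (1 + u ^ 2 / 2) < d /\ / - u < d.
Proof.
  intros Hd.
  exists (- (2 / d) - 1 - Rabs c).
  assert (H2 : 0 < 2 / d) by (apply Rdiv_lt_0_compat; lra).
  pose proof (Rabs_pos c). pose proof (Rle_abs (c)). pose proof (Rle_abs (- c)) as Hc. rewrite Rabs_Ropp in Hc.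
  remember (- (2 / d) - 1 - Rabs c) as u eqn:Hu.
  assert (Hi : 1 / d < 2 / d) by (unfold Rdiv; apply Rmult_lt_compat_r; [apply Rinv_0_lt_compat|]; lra).
  assert (H4 : 1 / d < - u) by lra.
  assert (Hu1 : 1 <= - u) by lra.
  assert (H3 : 1 / d < 1 + u ^ 2 / 2).
  { assert (- u <= u ^ 2) by nra. assert (2 / d < - u) by lra. lra. }
  split; [lra|]. split; [lra|]. split.
  - apply Rlt_le_trans with (/ (1 / d)). 2:{ right. field. lra. }
    apply Rinv_lt_contravar. apply Rmult_lt_0_compat. unfold Rdiv; apply Rmult_lt_0_compat; [lra| apply Rinv_0_lt_compat; lra]. nra.
    exact H3.
  - apply Rlt_le_trans with (/ (1 / d)). 2:{ right. field. lra. }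
    apply Rinv_lt_contravar. apply Rmult_lt_0_compat. unfold Rdiv; apply Rmult_lt_0_compat; [lra| apply Rinv_0_lt_compat; lra]. lra.
    exact H4.
Qed.

Lemma Mills_upper t : 0 < t -> t * Phi (- t) <= phi t.
Proof.
  intros Ht.
  assert (K : forall u, u <= - t -> Phi (- t) <= Phi u + phi t / t).
  { intros u Hu.
    pose proof (Phi_diff u (- t)) as D.
    assert (RInt phi u (- t) <= phi t / t - phi u / t).
    { apply Rle_trans with (RInt (fun s => - s * phi s / t) u (- t)).
      - apply RInt_le. lra. apply phi_int.
        apply (@ex_RInt_continuous R_CompleteNormedModule). intros.
        apply (@ex_derive_continuous R_AbsRing R_NormedModule). unfold phi. auto_derive.
        easy.
        intros s Hs. pose proof (phi_pos s).
        apply Rmult_le_reg_r with t. lra.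
        replace (- s * phi s / t * t) with (- s * phi s) by (field; lra). nra.
      - right.
        replace (phi t / t - phi u / t) with (minus (phi (- t) / t) (phi u / t))
          by (rewrite phi_even; unfold minus, plus, opp; simpl; ring).
        apply (@is_RInt_unique R_CompleteNormedModule).
        apply (@is_RInt_derive R_CompleteNormedModule (fun s => phi s / t)).
        + intros x _. unfold phi. pose proof sqrt2PI_pos. auto_derive. lra.
          replace (- x ^ 2 / 2) with (- (x * (x * 1)) * / 2) by (simpl; field). field. lra.
        + intros x _. apply (@ex_derive_continuous R_AbsRing R_NormedModule). unfold phi. auto_derive; try easy.
          }
    pose proof (phi_pos u).
    assert (0 <= phi u / t) by (apply Rlt_le, Rdiv_lt_0_compat; lra).
    lra. }
  destruct (Rle_or_lt (Phi (- t)) (phi t / t)) as [H|H].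
  - apply Rmult_le_reg_r with (/ t). apply Rinv_0_lt_compat; lra.
    replace (t * Phi (- t) * / t) with (Phi (- t)) by (field; lra). exact H.
  - exfalso.
    destruct (tail_small (Phi (- t) - phi t / t) (- t)) as [u [U1 [U2 [U3 _]]]]. lra.
    pose proof (K u U1). pose proof (Phi_tail u U2). lra.
Qed.

Lemma Mills_lower a : 0 <= a -> a * phi a <= (1 + a ^ 2) * Phi (- a).
Proof.
  intros Ha.
  set (F := fun x => - x * phi x / (1 + x ^ 2)).
  assert (K : forall u, u <= - a -> u < 0 -> F (- a) - / - u <= Phi (- a)).
  { intros u Hu Hu0.
    pose proof (Phi_diff u (- a)) as D.
    assert (F (- a) - F u <= RInt phi u (- a)).
    { apply Rle_trans with (RInt (fun x => phi x * (x ^ 4 + 2 * x ^ 2 - 1) / (1 + x ^ 2) ^ 2) u (- a)).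
      - right. symmetry.
        replace (F (- a) - F u) with (minus (F (- a)) (F u)) by (unfold minus, plus, opp; simpl; ring).
        apply (@is_RInt_unique R_CompleteNormedModule).
        apply (@is_RInt_derive R_CompleteNormedModule F).
        + intros x _. unfold F, phi. pose proof sqrt2PI_pos. auto_derive; [nra|].
          replace (- x ^ 2 / 2) with (- (x * (x * 1)) * / 2) by (simpl; field). field; repeat split; try lra; try nra.
        + intros x _. apply (@ex_derive_continuous R_AbsRing R_NormedModule). unfold phi. pose proof sqrt2PI_pos. auto_derive.
          repeat split; try lra; try nra.
      - apply RInt_le. lra.
        apply (@ex_RInt_continuous R_CompleteNormedModule). intros.
        apply (@ex_derive_continuous R_AbsRing R_NormedModule). unfold phi. pose proof sqrt2PI_pos. auto_derive.
        repeat split; try lra; try nra.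
        apply phi_int.
        intros x _. pose proof (phi_pos x).
        assert (0 < (1 + x ^ 2) ^ 2) by (apply pow_lt; nra).
        apply Rmult_le_reg_r with ((1 + x ^ 2) ^ 2). lra.
        replace (phi x * (x ^ 4 + 2 * x ^ 2 - 1) / (1 + x ^ 2) ^ 2 * (1 + x ^ 2) ^ 2)
          with (phi x * (x ^ 4 + 2 * x ^ 2 - 1)) by (field; nra).
        assert (0 <= x ^ 2) by apply pow2_ge_0. nra. }
    assert (F u <= / - u).
    { unfold F. pose proof (phi_le1 u). pose proof (phi_pos u).
      apply Rle_trans with (- u / (1 + u ^ 2)).
      - unfold Rdiv. apply Rmult_le_compat_r. apply Rlt_le, Rinv_0_lt_compat. nra. nra.
      - apply Rmult_le_reg_r with ((1 + u ^ 2) * - u). nra.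
        replace (- u / (1 + u ^ 2) * ((1 + u ^ 2) * - u)) with (u ^ 2) by (field; nra).
        replace (/ - u * ((1 + u ^ 2) * - u)) with (1 + u ^ 2) by (field; lra). lra. }
    pose proof (Phi_tail u (Rlt_le _ _ Hu0)). lra. }
  assert (FA : F (- a) * (1 + a ^ 2) = a * phi a).
  { unfold F. rewrite phi_even. field. nra. }
  destruct (Rle_or_lt (F (- a)) (Phi (- a))) as [H|H].
  - rewrite <- FA. assert (0 < 1 + a ^ 2) by nra. nra.
  - exfalso.
    destruct (tail_small (F (- a) - Phi (- a)) (- a - 1)) as [u [U1 [U2 [_ U4]]]]. lra.
    pose proof (K u ltac:(lra) ltac:(lra)). lra.
Qed.

Lemma sqrt2PI_lt3 : sqrt (2 * PI) < 3.
Proof.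
  pose proof PI_4. pose proof sqrt2PI_pos.
  assert (sqrt (2 * PI) * sqrt (2 * PI) = 2 * PI) by (apply sqrt_sqrt; generalize PI_gt3; lra).
  nra.
Qed.

Lemma phi1_ge : / 6 <= phi 1.
Proof.
  unfold phi. pose proof sqrt2PI_lt3. pose proof sqrt2PI_pos.
  pose proof (exp_ineq1_le (- 1 ^ 2 / 2)).
  replace (1 + - 1 ^ 2 / 2) with (/ 2) in H1 by (simpl; field).
  apply Rle_trans with (/ 2 / sqrt (2 * PI)).
  - apply Rmult_le_reg_r with (6 * sqrt (2 * PI)). nra.
    replace (/ 6 * (6 * sqrt (2 * PI))) with (sqrt (2 * PI)) by field.
    replace (/ 2 / sqrt (2 * PI) * (6 * sqrt (2 * PI))) with 3 by (field; lra). lra.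
  - unfold Rdiv. apply Rmult_le_compat_r. apply Rlt_le, Rinv_0_lt_compat; lra. exact H1.
Qed.

Lemma M_pos cplx eps a : 0 < eps < 1 -> 0 <= a -> 0 < Mfun cplx eps a.
Proof.
  intros [E0 E1] Ha. destruct cplx; simpl.
  - unfold M_C.
    assert (0 <= sqrt (2 * PI) * phi (sqrt 2 * a) - 2 * a * sqrt PI * Phi (- (sqrt 2 * a))).
    { destruct (Rle_lt_or_eq _ _ Ha) as [Ha'|Ha'].
      - assert (H2 : 0 < sqrt 2) by (apply sqrt_lt_R0; lra).
        assert (H22 : sqrt 2 * sqrt 2 = 2) by (apply sqrt_sqrt; lra).
        pose proof (Mills_upper (sqrt 2 * a) ltac:(nra)) as MU.
        replace (2 * a * sqrt PI * Phi (- (sqrt 2 * a))) with (sqrt (2 * PI) * (sqrt 2 * a * Phi (- (sqrt 2 * a)))).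
        2:{ rewrite sqrt2PI. transitivity ((sqrt 2 * sqrt 2) * a * sqrt PI * Phi (- (sqrt 2 * a))). ring. rewrite H22. ring. }
        pose proof sqrt2PI_pos. nra.
      - subst. pose proof (phi_pos (sqrt 2 * 0)). pose proof sqrt2PI_pos. nra. }
    assert (0 <= a ^ 2) by apply pow2_ge_0. nra.
  - unfold M_R.
    pose proof (Mills_lower a Ha).
    assert (0 <= a ^ 2) by apply pow2_ge_0. nra.
Qed.

Lemma M_lt1 cplx eps : 0 < eps < 1 -> exists a, 0 <= a /\ Mfun cplx eps a < 1.
Proof.
  intros [E0 E1]. pose proof phi1_ge. destruct cplx; simpl.
  - remember ((1 - eps) / 30) as a eqn:Ea. exists a.
    assert (Ha : 0 < a) by (subst a; lra).
    assert (H2 : 0 < sqrt 2) by (apply sqrt_lt_R0; lra).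
    assert (H22 : sqrt 2 * sqrt 2 = 2) by (apply sqrt_sqrt; lra).
    remember (sqrt 2 * a) as t eqn:Et.
    assert (Ht : t <= 1) by (subst t a; nra).
    assert (Ht0 : 0 < t) by (subst t; nra).
    assert (P1 : Phi (- 1) <= Phi (- t)).
    { pose proof (Phi_diff (- 1) (- t)).
      assert (0 <= RInt phi (- 1) (- t)).
      { apply Rle_trans with (RInt (fun _ => 0) (- 1) (- t)). rewrite RInt_const_R. lra.
        apply RInt_le. lra. apply ex_RInt_const. apply phi_int. intros; apply Rlt_le, phi_pos. }
      lra. }
    pose proof (Mills_lower 1 ltac:(lra)) as ML.
    assert (P2 : / 12 <= Phi (- t)) by (replace (1 + 1 ^ 2) with 2 in ML by ring; replace (- (1)) with (-1) in ML by ring; lra).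
    assert (P3 : sqrt (2 * PI) * phi t <= 1).
    { unfold phi. pose proof sqrt2PI_pos.
      replace (sqrt (2 * PI) * (exp (- t ^ 2 / 2) / sqrt (2 * PI))) with (exp (- t ^ 2 / 2)) by (field; lra).
      rewrite <- exp_0. apply exp_le. assert (0 <= t ^ 2) by apply pow2_ge_0. lra. }
    assert (P4 : 1 <= sqrt PI) by (rewrite <- sqrt_1; apply sqrt_le_1_alt; generalize PI_gt3; lra).
    unfold M_C. rewrite <- Et.
    assert (Q : 2 * a * sqrt PI * Phi (- t) >= 2 * a * / 12).
    { assert (0 < 2 * a) by lra. assert (/12 <= sqrt PI * Phi (- t)) by nra. nra. }
    assert (1 - eps = 30 * a) by (subst a; field).
    nra.
  - remember ((1 - eps) / 3) as a eqn:Ea. exists a.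
    assert (Ha : 0 < a) by (subst a; lra).
    assert (Ha1 : a <= 1) by (subst a; lra).
    pose proof (Phi_upper0 a (Rlt_le _ _ Ha)) as PU.
    assert (Pp : / 6 <= phi a) by (apply Rle_trans with (phi 1); [lra | apply phi_mono; nra]).
    unfold M_R.
    assert (1 - eps = 3 * a) by (subst a; field).
    remember (phi a) as p eqn:Ep. remember (Phi (- a)) as P eqn:EP.
    assert (0 <= a ^ 2) by apply pow2_ge_0.
    assert (K : (1 - eps) * (1 + a ^ 2) * (P - (/ 2 - a * p)) <= 0).
    { assert (0 <= (1 - eps) * (1 + a ^ 2)) by nra. nra. }
    assert (K2 : a ^ 2 < (1 - eps) * 2 * a * p * (2 + a ^ 2)).
    { rewrite H0. assert (0 < a ^ 2) by nra.
      replace (3 * a * 2 * a * p * (2 + a ^ 2)) with (a ^ 2 * (6 * p * (2 + a ^ 2))) by ring.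
      assert (2 <= 6 * p * (2 + a ^ 2)) by nra. nra. }
    nra.
Qed.

Theorem proposition2 (cplx : bool) (eps sigma0sq alpha_dag delta_dag : R) :
  0 < eps < 1 ->
  0 < sigma0sq ->
  is_alpha_dagger cplx eps alpha_dag ->
  is_delta_dagger (Mfun cplx eps alpha_dag) sigma0sq delta_dag ->
  delta_dag < 2 /\
  (Mfun cplx eps alpha_dag < /2 -> delta_dag < 1).
Proof.
  intros He Hs [Ha Hmin] [Hd Hdmin].
  pose proof (M_pos cplx eps alpha_dag He Ha) as Mpos.
  destruct (M_lt1 cplx eps He) as [a0 [Ha0 Ma0]].
  pose proof (Hmin a0 Ha0) as Hle.
  set (M := Mfun cplx eps alpha_dag) in *.
  assert (HM1 : M < 1) by lra.
  assert (Hd2 : delta_dag = 2 * M).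
  { pose proof (Hdmin (2 * M) ltac:(lra)) as E. unfold Err_inf in E.
    assert (Id : M * delta_dag ^ 2 * sigma0sq / (delta_dag - M) - M * (2 * M) ^ 2 * sigma0sq / (2 * M - M)
                 = M * sigma0sq * (delta_dag - 2 * M) ^ 2 / (delta_dag - M)) by (field; lra).
    assert (0 <= M * sigma0sq * (delta_dag - 2 * M) ^ 2 / (delta_dag - M)).
    { apply Rle_mult_inv_pos. apply Rmult_le_pos. apply Rmult_le_pos; lra. apply pow2_ge_0. lra. }
    assert (Z : M * sigma0sq * (delta_dag - 2 * M) ^ 2 / (delta_dag - M) = 0) by lra.
    unfold Rdiv in Z. apply Rmult_integral in Z. destruct Z as [Z|Z].
    - apply Rmult_integral in Z. destruct Z as [Z|Z].
      + apply Rmult_integral in Z. destruct Z; lra.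
      + apply pow_eq_zero_stt in Z || (assert (delta_dag - 2 * M = 0) by nra). lra.
    - exfalso. apply (Rinv_neq_0_compat (delta_dag - M)). lra. exact Z. }
  split; intros; lra.
Qed.
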